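(* Let $A$ be an AUF algebra and let $M$ be a coherent left $A$-module that is projective. Then $M$ is a projective generator of $\mathrm{Coh}_{\mathrm L}(A)$ if and only if every irreducible coherent left $A$-module is an epimorphic image of $M$.
   Context: All algebras are associative $\mathbb C$-algebras, not necessarily unital. An idempotent is $e$ with $e^2=e$. An algebra $A$ is AUF if there is a family $(e_i)_{i\in\mathfrak I}$ of mutually orthogonal idempotents with $\dim e_iAe_j<\infty$ and $A=\sum_{i,j}e_iAe_j$. A left $A$-module $M$ is quasicoherent if $\xi\in A\xi$ for all $\xi\in M$, coherent if moreover finitely generated; $\mathrm{Coh}_{\mathrm L}(A)$ is the category of coherent left $A$-modules. Irreducible means nonzero with no nonzero proper submodules (in the category of all left $A$-modules). A projective generator of $\mathrm{Coh}_{\mathrm L}(A)$ is a projective coherent module $M$ such that every coherent left $A$-module is a quotient of $M^{\oplus n}$ for some $n\ge1$. *)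

(* Defs.v *)
(* Non-unital associative C-algebras and their left modules,
   set up from scratch (MathComp's ring structures are unital). *)
From HB Require Import structures.
From mathcomp Require Import all_boot all_algebra.
From mathcomp Require Import complex Rstruct.

Set Implicit Arguments.
Unset Strict Implicit.
Unset Printing Implicit Defensive.

Import GRing.Theory.
Local Open Scope ring_scope.

Definition C : fieldType := (Rdefinitions.R)[i].

Record nualg := NuAlg {
  acarrier :> lmodType C;
  amul : acarrier -> acarrier -> acarrier;
  amulDl : forall a b c, amul (a + b) c = amul a c + amul b c;
  amulDr : forall a b c, amul a (b + c) = amul a b + amul a c;
  amulZl : forall (k : C) a b, amul (k *: a) b = k *: amul a b;
  amulZr : forall (k : C) a b, amul a (k *: b) = k *: amul a b;
  amulA  : forall a b c, amul a (amul b c) = amul (amul a b) c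
}.

(* A subset P of a C-vector space V is finite dimensional (P is meant to be
   a subspace): it is spanned by a finite family of vectors. *)
Definition fin_dim_subspace (V : lmodType C) (P : V -> Prop) : Prop :=
  exists vs : seq V, forall x, P x ->
    exists c : 'I_(size vs) -> C, x = \sum_(k < size vs) c k *: vs`_k.

Definition AUF (A : nualg) : Prop :=
  exists (I : Type) (e : I -> A),
    (forall i, amul (e i) (e i) = e i) /\
    (forall i j, i <> j -> amul (e i) (e j) = 0) /\
    (forall i j, fin_dim_subspace (fun y : A =>
        exists x : A, y = amul (amul (e i) x) (e j))) /\
    (forall a : A, exists s : seq ((I * I) * A),
        a = \sum_(t <- s) amul (amul (e t.1.1) t.2) (e t.1.2)).

Record lmodule (A : nualg) := LModule {
  mcarrier :> lmodType C;
  act : A -> mcarrier -> mcarrier;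
  actDl : forall a b m, act (a + b) m = act a m + act b m;
  actDr : forall a m n, act a (m + n) = act a m + act a n;
  actZl : forall (k : C) a m, act (k *: a) m = k *: act a m;
  actZr : forall (k : C) a m, act a (k *: m) = k *: act a m;
  actA  : forall a b m, act (amul a b) m = act a (act b m)
}.

Section Modules.
Variable A : nualg.

Definition is_hom (M N : lmodule A) (f : M -> N) : Prop :=
  (forall x y, f (x + y) = f x + f y) /\
  (forall (k : C) x, f (k *: x) = k *: f x) /\
  (forall (a : A) x, f (act a x) = act a (f x)).

Definition surj (M N : Type) (f : M -> N) : Prop := forall y, exists x, f x = y.

Definition is_submodule (M : lmodule A) (P : M -> Prop) : Prop :=
  P 0 /\ (forall x y, P x -> P y -> P (x + y)) /\
  (forall (k : C) x, P x -> P (k *: x)) /\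
  (forall (a : A) x, P x -> P (act a x)).

Definition quasicoherent (M : lmodule A) : Prop :=
  forall xi : M, exists a : A, act a xi = xi.

Definition fin_generated (M : lmodule A) : Prop :=
  exists gens : seq M, forall P : M -> Prop, is_submodule P ->
    (forall i : 'I_(size gens), P gens`_i) -> forall x, P x.

Definition coherent (M : lmodule A) : Prop :=
  quasicoherent M /\ fin_generated M.

(* Irreducible (in the category of all left A-modules). *)
Definition irreducible (M : lmodule A) : Prop :=
  (exists x : M, x <> 0) /\
  forall P : M -> Prop, is_submodule P ->
    (forall x, P x -> x = 0) \/ (forall x, P x).

(* Projective object of Coh_L(A); epimorphisms in Coh_L(A) are the surjective
   homomorphisms. *)
Definition projective_coh (M : lmodule A) : Prop :=
  forall (N P : lmodule A), coherent N -> coherent P ->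
  forall g : N -> P, is_hom g -> surj g ->
  forall f : M -> P, is_hom f ->
  exists h : M -> N, is_hom h /\ forall x, g (h x) = f x.

Section DirectSum.
Variables (M : lmodule A) (n : nat).
Definition dsum_type : lmodType C := {ffun 'I_n -> M}.
Definition dsum_act (a : A) (x : dsum_type) : dsum_type :=
  [ffun i => act a (x i)].

Lemma dsum_actDl a b m : dsum_act (a + b) m = dsum_act a m + dsum_act b m.
Proof. by apply/ffunP => i; rewrite !ffunE actDl. Qed.
Lemma dsum_actDr a m m' : dsum_act a (m + m') = dsum_act a m + dsum_act a m'.
Proof. by apply/ffunP => i; rewrite !ffunE actDr. Qed.
Lemma dsum_actZl (k : C) a m : dsum_act (k *: a) m = k *: dsum_act a m.
Proof. by apply/ffunP => i; rewrite !ffunE actZl. Qed.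
Lemma dsum_actZr (k : C) a m : dsum_act a (k *: m) = k *: dsum_act a m.
Proof. by apply/ffunP => i; rewrite !ffunE actZr. Qed.
Lemma dsum_actA a b m : dsum_act (amul a b) m = dsum_act a (dsum_act b m).
Proof. by apply/ffunP => i; rewrite !ffunE actA. Qed.

Definition dsum : lmodule A :=
  @LModule A dsum_type dsum_act dsum_actDl dsum_actDr dsum_actZl dsum_actZr
    dsum_actA.
End DirectSum.

Definition projective_generator (M : lmodule A) : Prop :=
  coherent M /\ projective_coh M /\
  forall N : lmodule A, coherent N ->
    exists n : nat, (1 <= n)%N /\
      exists f : dsum M n -> N, is_hom f /\ surj f.

End Modules.

(* Main.v *)
Require Import Defs.
From mathcomp Require Import all_boot all_algebra.
From HB Require Import structures.
From mathcomp Require Import boolp classical_sets.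
Set Implicit Arguments.
Unset Strict Implicit.
Unset Printing Implicit Defensive.
Import GRing.Theory.
Local Open Scope ring_scope.

Section Basics.
Variable A : nualg.
Lemma act0 (N : lmodule A) a : act a (0 : N) = 0.
Proof. by apply/(@addrI _ (act a (0:N))); rewrite -actDr !addr0. Qed.
Lemma actN (N : lmodule A) a (x : N) : act a (- x) = - act a x.
Proof. by rewrite -scaleN1r actZr scaleN1r. Qed.
Lemma actB (N : lmodule A) a (x y : N) : act a (x - y) = act a x - act a y.
Proof. by rewrite actDr actN. Qed.
Lemma hom0 (M N : lmodule A) (f : M -> N) : is_hom f -> f 0 = 0.
Proof. by case=> fD _; apply/(@addrI _ (f 0)); rewrite -fD !addr0. Qed.
Lemma homN (M N : lmodule A) (f : M -> N) x : is_hom f -> f (- x) = - f x.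
Proof. by case=> _ [fZ _]; rewrite -scaleN1r fZ scaleN1r. Qed.
Lemma subN (N : lmodule A) (K : N -> Prop) x : is_submodule K -> K x -> K (- x).
Proof. by case=> _ [_ [KZ _]] Kx; rewrite -scaleN1r; apply: KZ. Qed.
Lemma subB (N : lmodule A) (K : N -> Prop) x y : is_submodule K -> K x -> K y -> K (x - y).
Proof. by move=> HK Kx Ky; case: (HK) => _ [KD _]; apply: KD => //; apply: subN. Qed.
End Basics.

Section Quot.
Variables (A : nualg) (N : lmodule A) (K : N -> Prop) (HK : is_submodule K).

Definition qrel (x : N) : pred N := fun y => `[< K (x - y) >].
Lemma qrel_ex x : exists y, qrel x y.
Proof. by exists x; apply/asboolP; rewrite subrr; case: HK. Qed.
Definition rep x := xchoose (qrel_ex x).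
Lemma rep_rel x : K (x - rep x).
Proof. exact/asboolP/(xchooseP (qrel_ex x)). Qed.
Lemma rep_eq x y : K (x - y) -> rep x = rep y.
Proof.
move=> Kxy; apply: eq_xchoose => z; apply/asboolP/asboolP => H.
  by have := subB HK H Kxy; rewrite opprB addrC addrA subrK.
by have := proj1 (proj2 HK) _ _ Kxy H; rewrite addrA subrK.
Qed.
Lemma rep_idem x : rep (rep x) = rep x.
Proof. by apply: rep_eq; have := subN HK (rep_rel x); rewrite opprB. Qed.
Lemma rep_eqE x y : rep x = rep y -> K (x - y).
Proof.
move=> E; have := subB HK (rep_rel x) (rep_rel y).
by rewrite E opprB addrA subrK.
Qed.

Definition Q := {x : N | rep x == x}.
HB.instance Definition _ := Choice.copy Q {x : N | rep x == x}.
Definition qpi (x : N) : Q := exist _ (rep x) (introT eqP (rep_idem x)).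
Lemma qpiK (q : Q) : qpi (val q) = q.
Proof. by apply: val_inj; rewrite /= (eqP (valP q)). Qed.
Lemma qpiP (q : Q) : exists x, q = qpi x.
Proof. by exists (val q); rewrite qpiK. Qed.
Lemma pi_eq x y : K (x - y) -> qpi x = qpi y.
Proof. by move=> H; apply: val_inj; rewrite /= (rep_eq H). Qed.
Lemma pi_eqE x y : qpi x = qpi y -> K (x - y).
Proof. by move=> /(congr1 val) /= /rep_eqE. Qed.

Definition qzero := qpi 0.
Definition qadd (p q : Q) := qpi (val p + val q).
Definition qopp (q : Q) := qpi (- val q).
Definition qscale (k : C) (q : Q) := qpi (k *: val q).
Definition qact (a : A) (q : Q) := qpi (act a (val q)).

Lemma qaddE x y : qadd (qpi x) (qpi y) = qpi (x + y).
Proof.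
apply: pi_eq => /=; rewrite opprD addrACA.
have := subN HK (rep_rel x); have := subN HK (rep_rel y); rewrite !opprB.
by move=> H1 H2; apply: (proj1 (proj2 HK)).
Qed.
Lemma qoppE x : qopp (qpi x) = qpi (- x).
Proof. by apply: pi_eq => /=; rewrite opprK addrC; apply: rep_rel. Qed.
Lemma qscaleE k x : qscale k (qpi x) = qpi (k *: x).
Proof.
apply: pi_eq => /=; have := proj1 (proj2 (proj2 HK)) k _ (subN HK (rep_rel x)).
by rewrite opprB scalerBr.
Qed.
Lemma qactE a x : qact a (qpi x) = qpi (act a x).
Proof.
apply: pi_eq => /=; have := proj2 (proj2 (proj2 HK)) a _ (subN HK (rep_rel x)).
by rewrite opprB actB.
Qed.

Lemma qaddA : associative qadd.
Proof.
move=> p q r; case: (qpiP p) => x ->; case: (qpiP q) => y ->; case: (qpiP r) => z ->.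
by rewrite !qaddE addrA.
Qed.
Lemma qaddC : commutative qadd.
Proof. by move=> p q; case: (qpiP p) => x ->; case: (qpiP q) => y ->; rewrite !qaddE addrC. Qed.
Lemma qadd0 : left_id qzero qadd.
Proof. by move=> p; case: (qpiP p) => x ->; rewrite /qzero qaddE add0r. Qed.
Lemma qaddN : left_inverse qzero qopp qadd.
Proof. by move=> p; case: (qpiP p) => x ->; rewrite qoppE qaddE addNr. Qed.

HB.instance Definition _ := GRing.isZmodule.Build Q qaddA qaddC qadd0 qaddN.
Lemma qaddE' x y : (qpi x + qpi y : Q) = qpi (x + y).
Proof. exact: qaddE. Qed.

Lemma qscaleA a b v : qscale a (qscale b v) = qscale (a * b) v.
Proof. by case: (qpiP v) => x ->; rewrite !qscaleE scalerA. Qed.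
Lemma qscale1 : left_id 1 qscale.
Proof. by move=> v; case: (qpiP v) => x ->; rewrite !qscaleE scale1r. Qed.
Lemma qscaleDr : right_distributive qscale +%R.
Proof.
move=> a u v; case: (qpiP u) => x ->; case: (qpiP v) => y ->.
by rewrite qaddE' !qscaleE qaddE' scalerDr.
Qed.
Lemma qscaleDl v : {morph qscale^~ v: a b / a + b}.
Proof.
move=> a b; case: (qpiP v) => x ->.
by rewrite !qscaleE qaddE' scalerDl.
Qed.
HB.instance Definition _ := GRing.Zmodule_isLmodule.Build C Q qscaleA qscale1 qscaleDr qscaleDl.

Lemma qscaleE' k x : (k *: qpi x : Q) = qpi (k *: x).
Proof. exact: qscaleE. Qed.

Lemma qactDl a b m : qact (a + b) m = qact a m + qact b m.
Proof. by case: (qpiP m) => x ->; rewrite !qactE qaddE' actDl. Qed.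
Lemma qactDr a m n : qact a (m + n) = qact a m + qact a n.
Proof. by case: (qpiP m) => x ->; case: (qpiP n) => y ->; rewrite qaddE' !qactE qaddE' actDr. Qed.
Lemma qactZl (k : C) a m : qact (k *: a) m = k *: qact a m.
Proof. by case: (qpiP m) => x ->; rewrite !qactE qscaleE' actZl. Qed.
Lemma qactZr (k : C) a m : qact a (k *: m) = k *: qact a m.
Proof. by case: (qpiP m) => x ->; rewrite qscaleE' !qactE qscaleE' actZr. Qed.
Lemma qactA a b m : qact (amul a b) m = qact a (qact b m).
Proof. by case: (qpiP m) => x ->; rewrite !qactE actA. Qed.

Definition qmod : lmodule A := @LModule A Q qact qactDl qactDr qactZl qactZr qactA.

Lemma pi_hom : @is_hom A N qmod qpi.
Proof.
split; first by move=> x y; rewrite qaddE'.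
split; first by move=> k x; rewrite qscaleE'.
by move=> a x; rewrite /= qactE.
Qed.
Lemma pi_surj : surj (qpi : N -> qmod).
Proof. by move=> q; case: (qpiP q) => x ->; exists x. Qed.
Lemma pi0 x : (qpi x = 0 :> qmod) <-> K x.
Proof.
split; first by move/pi_eqE; rewrite subr0.
by move=> Kx; apply: pi_eq; rewrite subr0.
Qed.
End Quot.

Section Fwd.
Variables (A : nualg) (M : lmodule A) (n : nat).

Definition delta (i : 'I_n) (m : M) : dsum M n := [ffun j => if j == i then m else 0].

Lemma delta_hom i : is_hom (delta i).
Proof.
split; first by move=> x y; apply/ffunP => j; rewrite !ffunE; case: eqP; rewrite ?addr0.
split; first by move=> k x; apply/ffunP => j; rewrite !ffunE; case: eqP; rewrite ?scaler0.
by move=> a x; apply/ffunP => j; rewrite /= /dsum_act !ffunE; case: eqP; rewrite ?act0.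
Qed.

Lemma delta_sum (x : dsum M n) : x = \sum_i delta i (x i).
Proof.
apply/ffunP => j; rewrite sum_ffunE (bigD1 j) //= big1 ?addr0 ?ffunE ?eqxx //.
by move=> i /negPf ij; rewrite ffunE eq_sym ij.
Qed.

Lemma hom_sum (N : lmodule A) (f : dsum M n -> N) : is_hom f ->
  forall x, f x = \sum_i f (delta i (x i)).
Proof.
move=> fh x; rewrite {1}(delta_sum x).
exact: (big_morph f (proj1 fh) (hom0 fh)).
Qed.
End Fwd.

Lemma himage_sub (A : nualg) (M N : lmodule A) (f : M -> N) : is_hom f ->
  is_submodule (fun y => exists x, f x = y).
Proof.
move=> fh; case: (fh) => fD [fZ fA].
split; first by exists 0; rewrite (hom0 fh).
split; first by move=> _ _ [x <-] [y <-]; exists (x + y).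
split; first by move=> k _ [x <-]; exists (k *: x).
by move=> a _ [x <-]; exists (act a x).
Qed.

Lemma fwd (A : nualg) (M N : lmodule A) n (f : dsum M n -> N) :
  is_hom f -> surj f -> irreducible N -> exists g : M -> N, is_hom g /\ surj g.
Proof.
move=> fh fs [[y0 y0n] irr].
case: (pselect (exists i, surj (fun m => f (delta i m)))) => [[i si]|nos].
  exists (fun m => f (delta i m)); split => //.
  case: (fh) => fD [fZ fA]; case: (delta_hom M i) => dD [dZ dA].
  split; first by move=> x y; rewrite dD fD.
  split; first by move=> k x; rewrite dZ fZ.
  by move=> a x; rewrite dA fA.
exfalso; apply: y0n; case: (fs y0) => x <-.
rewrite (hom_sum fh) big1 // => i _.
have gh : is_hom (fun m => f (delta i m)).
  case: (fh) => fD [fZ fA]; case: (delta_hom M i) => dD [dZ dA].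
  split; first by move=> x' y; rewrite dD fD.
  split; first by move=> k x'; rewrite dZ fZ.
  by move=> a x'; rewrite dA fA.
case: (irr _ (himage_sub gh)) => [H|H]; first by apply: H; exists (x i).
by exfalso; apply: nos; exists i => y; case: (H y) => m <-; exists m.
Qed.

Lemma nth_In_or (T : Type) (x0 : T) (s : seq T) i :
  List.In (nth x0 s i) s \/ nth x0 s i = x0.
Proof.
elim: s i => [|a s IH] [|i] /=; try by right.
  by left; left.
by case: (IH i) => H; [left; right|right].
Qed.

Lemma nth_In' (T : Type) (x0 : T) (s : seq T) i :
  (i < size s)%N -> List.In (nth x0 s i) s.
Proof.
elim: s i => [|a s IH] [|i] //=; first by left.
by move=> H; right; apply: IH.
Qed.

Lemma In_nth' (T : Type) (x0 : T) (s : seq T) x :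
  List.In x s -> exists i, (i < size s)%N /\ nth x0 s i = x.
Proof.
elim: s => [|a s IH] //= [->|/IH [i [Hi E]]]; first by exists 0%N.
by exists i.+1.
Qed.

Section Bwd.
Variables (A : nualg) (M N : lmodule A).

Definition pairs := seq ((M -> N) * M).
Definition homs (s : pairs) := forall t, List.In t s -> is_hom t.1.
Definition ssum (s : pairs) : N := \sum_(t <- s) t.1 t.2.

Definition T (x : N) := exists s : pairs, homs s /\ x = ssum s.

Lemma homs_cons t s : homs (t :: s) -> is_hom t.1 /\ homs s.
Proof. by move=> H; split; [apply: H; left | move=> u Hu; apply: H; right]. Qed.

Lemma ssum_cons t s : ssum (t :: s) = t.1 t.2 + ssum s.
Proof. by rewrite /ssum big_cons. Qed.

Lemma ssum_nil : ssum [::] = 0.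
Proof. by rewrite /ssum big_nil. Qed.

Lemma T_sub : is_submodule T.
Proof.
split; first by exists [::]; split => //; rewrite ssum_nil.
split.
  move=> _ _ [s [hs ->]] [s' [hs' ->]]; exists (s ++ s'); split; last by rewrite /ssum big_cat.
  by move=> t /List.in_app_iff [/hs|/hs'].
split.
  move=> k _ [s [hs ->]]; exists [seq (t.1, k *: t.2) | t <- s]; split.
    by move=> t /List.in_map_iff [u [<- /hs]].
  elim: s hs => [|t s IH] hs; first by rewrite !ssum_nil scaler0.
  by case/homs_cons: hs => [[_ [fZ _]] hs]; rewrite /= !ssum_cons -IH // scalerDr -fZ.
move=> a _ [s [hs ->]]; exists [seq (t.1, act a t.2) | t <- s]; split.
  by move=> t /List.in_map_iff [u [<- /hs]].
elim: s hs => [|t s IH] hs; first by rewrite !ssum_nil act0.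
by case/homs_cons: hs => [[_ [_ fA]] hs]; rewrite /= !ssum_cons -IH // actDr -fA.
Qed.
End Bwd.

Section Cover.
Variables (A : nualg) (M N : lmodule A).

Lemma tcover (l : seq N) : (forall x, List.In x l -> T M x) ->
  exists s : pairs M N, homs s /\ forall x, List.In x l ->
    exists s' : pairs M N, (forall t, List.In t s' -> List.In t s) /\ x = ssum s'.
Proof.
elim: l => [|a l IH] Hl; first by exists [::]; split.
case: (Hl a (or_introl erefl)) => sa [hsa Ea].
case: IH => [x Hx|s [hs Hs]]; first by apply: Hl; right.
exists (sa ++ s); split.
  by move=> t /List.in_app_iff [/hsa|/hs].
move=> x [<-|/Hs [s' [H1 H2]]].
  by exists sa; split => // t Ht; apply/List.in_app_iff; left.
by exists s'; split => // t Ht; apply/List.in_app_iff; right; apply: H1.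
Qed.

Lemma zero_hom : is_hom (fun _ : M => 0 : N).
Proof. by split; [move=> *; rewrite addr0|split; [move=> *; rewrite scaler0|move=> *; rewrite act0]]. Qed.

Definition dd : (M -> N) * M := (fun _ => 0, 0).

Section F.
Variable s0 : pairs M N.
Hypothesis hs0 : homs s0.
Let n := size s0.
Definition Fm (x : dsum M n) : N := \sum_(i < n) (nth dd s0 i).1 (x i).

Lemma nth_hom i : is_hom (nth dd s0 i).1.
Proof. by case: (nth_In_or dd s0 i) => [/hs0|->] //; exact: zero_hom. Qed.

Lemma Fm_hom : is_hom Fm.
Proof.
split.
  move=> x y; rewrite /Fm -big_split; apply: eq_bigr => i _.
  by rewrite ffunE (proj1 (nth_hom i)).
split.
  move=> k x; rewrite /Fm scaler_sumr; apply: eq_bigr => i _.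
  by rewrite ffunE (proj1 (proj2 (nth_hom i))).
move=> a x; rewrite /Fm (big_morph (act a) (actDr a) (act0 _ a)); apply: eq_bigr => i _.
by rewrite /= /dsum_act ffunE (proj2 (proj2 (nth_hom i))).
Qed.

Lemma Fm_in t : List.In t s0 -> exists x, Fm x = t.1 t.2.
Proof.
case/(In_nth' dd) => i [Hi E].
exists (delta (Ordinal Hi) t.2); rewrite /Fm (bigD1 (Ordinal Hi)) //= big1.
  by rewrite addr0 ffunE eqxx E.
move=> j /negPf ji; rewrite ffunE ji; exact: (hom0 (nth_hom j)).
Qed.

Lemma Fm_ssum s' : (forall t, List.In t s' -> List.In t s0) -> exists x, Fm x = ssum s'.
Proof.
have [I0 [ID _]] := himage_sub Fm_hom.
elim: s' => [|t s' IH] H; first by rewrite ssum_nil.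
rewrite ssum_cons; apply: ID; first by apply: Fm_in; apply: H; left.
by apply: IH => u Hu; apply: H; right.
Qed.
End F.
End Cover.

Section Max.
Variables (A : nualg) (M N : lmodule A) (gens : seq N).

Definition good (X : N -> Prop) := is_submodule X /\ (forall x, T M x -> X x) /\
  ~ (forall i : 'I_(size gens), X gens`_i).
Definition Pg (X : set N) := X = set0 \/ good X.

Lemma Pg_ne X z : Pg X -> X z -> good X.
Proof. by case=> // ->. Qed.

Lemma chain_ub (F : set (set N)) : (F `<=` Pg)%classic -> total_on F subset ->
  Pg (\bigcup_(X in F) X)%classic.
Proof.
move=> FP tot.
case: (pselect (exists X, F X /\ exists z, X z)) => [[X0 [FX0 [z X0z]]]|none]; last first.
  left; apply/seteqP; split => x //= [X FX Xx]; exfalso; apply: none.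
  by exists X; split; [|exists x].
right.
have gX X y : F X -> X y -> good X by move=> FX Xy; apply: (Pg_ne (FP X FX) Xy).
have lub : forall l : seq N, (forall x, List.In x l -> (\bigcup_(X in F) X)%classic x) ->
    exists X, F X /\ X z /\ forall x, List.In x l -> X x.
  elim => [|a l IH] Hl; first by exists X0.
  case: (Hl a (or_introl erefl)) => Xa FXa Xaa.
  case: IH => [x Hx|X [FX [Xz HX]]]; first by apply: Hl; right.
  case: (tot _ _ FXa FX) => sub.
    by exists X; split => //; split => // x [<-|/HX]; [apply: sub|].
  by exists Xa; split => //; split; [apply: sub|move=> x [<-|/HX/sub]].
have X0s := proj1 (gX _ _ FX0 X0z).
split.
  split; first by exists X0 => //; case: X0s.
  split.
    move=> x y [X1 FX1 X1x] [X2 FX2 X2y].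
    case: (tot _ _ FX1 FX2) => sub.
      exists X2 => //; apply: (proj1 (proj2 (proj1 (gX _ _ FX2 X2y)))) => //; exact: sub.
    exists X1 => //; apply: (proj1 (proj2 (proj1 (gX _ _ FX1 X1x)))) => //; exact: sub.
  split.
    move=> k x [X1 FX1 X1x]; exists X1 => //.
    exact: (proj1 (proj2 (proj2 (proj1 (gX _ _ FX1 X1x))))).
  move=> a x [X1 FX1 X1x]; exists X1 => //.
  exact: (proj2 (proj2 (proj2 (proj1 (gX _ _ FX1 X1x))))).
split; first by move=> x Tx; exists X0 => //; apply: (proj1 (proj2 (gX _ _ FX0 X0z))).
move=> allg; case: (lub gens) => [x /(In_nth' 0) [i [Hi <-]]|X [FX [Xz HX]]].
  exact: (allg (Ordinal Hi)).
apply: (proj2 (proj2 (gX _ _ FX Xz))) => i; apply: HX; apply: nth_In'; exact: ltn_ord.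
Qed.

Lemma max_sub : ~ (forall i : 'I_(size gens), T M gens`_i) ->
  exists K, good K /\ forall B, is_submodule B -> (forall x, K x -> B x) ->
    (forall x, B x -> K x) \/ (forall i : 'I_(size gens), B gens`_i).
Proof.
move=> notall.
have goodT : good (@T A M N) by split; [exact: T_sub|split].
have [K0 [PK0 K0max]] := Zorn_bigcup chain_ub.
case: PK0 => [K00|gK0].
  exfalso; apply: (K0max (@T A M N)); last by right.
  rewrite K00; split => // H; have := H 0; rewrite /set0 /=; apply.
  by exists [::]; split => //; rewrite ssum_nil.
exists K0; split => // B Bsub KB.
case: (pselect (forall x, B x -> K0 x)) => [|nBK]; first by left.
case: (pselect (forall i : 'I_(size gens), B gens`_i)) => [|nBg]; first by right.
exfalso; apply: (K0max B); first by split.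
right; split => //; split => // x Tx; apply: KB; apply: (proj1 (proj2 gK0)).
exact: Tx.
Qed.
End Max.

Lemma preim_sub (A : nualg) (N S : lmodule A) (g : N -> S) (P : S -> Prop) :
  is_hom g -> is_submodule P -> is_submodule (fun x => P (g x)).
Proof.
move=> gh [P0 [PD [PZ PA]]]; case: (gh) => gD [gZ gA].
split; first by rewrite (hom0 gh).
split; first by move=> x y Px Py; rewrite gD; apply: PD.
split; first by move=> k x Px; rewrite gZ; apply: PZ.
by move=> a x Px; rewrite gA; apply: PA.
Qed.

Lemma bwd (A : nualg) (M : lmodule A) (HMproj : projective_coh M)
  (H : forall N : lmodule A, coherent N -> irreducible N ->
     exists f : M -> N, is_hom f /\ surj f)
  (N : lmodule A) (cN : coherent N) :
  exists n : nat, (1 <= n)%N /\ exists f : dsum M n -> N, is_hom f /\ surj f.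
Proof.
case: (cN) => qN [gens Hg].
case: (pselect (forall i : 'I_(size gens), T M gens`_i)) => [allT|notall].
  have [s [hs Hs]] : exists s : pairs M N, homs s /\ forall x, List.In x gens ->
      exists s' : pairs M N, (forall t, List.In t s' -> List.In t s) /\ x = ssum s'.
    apply: tcover => x /(In_nth' 0) [i [Hi <-]]; exact: (allT (Ordinal Hi)).
  pose s0 := dd M N :: s.
  have hs0 : homs s0 by move=> t [<-|/hs] //; exact: zero_hom.
  exists (size s0); split => //; exists (@Fm _ M N s0); split; first exact: Fm_hom.
  move=> y; apply: (Hg (fun y => exists x, @Fm _ M N s0 x = y)) => [|i].
    exact: himage_sub (Fm_hom hs0).
  have [s' [Hs' ->]] := Hs _ (nth_In' 0 (ltn_ord i)).
  by apply: Fm_ssum => // t /Hs' Ht; right.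
have [K [[Ksub [TK Kpr]] Kmax]] := max_sub notall.
pose S := @qmod A N K Ksub.
pose p : N -> S := @qpi A N K Ksub.
have ph : is_hom p := pi_hom Ksub.
have pre P : is_submodule P -> is_submodule (fun x => P (p x)) by move=> Ps; exact: preim_sub ph Ps.
have cS : coherent S.
  split.
    move=> q; case: (qpiP q) => x ->; case: (qN x) => a Ha; exists a.
    by rewrite /= qactE Ha.
  exists (map p gens) => P Ps Pgi q; case: (qpiP q) => x ->.
  apply: (Hg (fun x => P (p x))) => [|i]; first exact: pre.
  have Hi : (i < size (map p gens))%N by rewrite size_map.
  by have := Pgi (Ordinal Hi); rewrite /= (nth_map 0).
have [i0 Ki0] : exists i, ~ K gens`_i.
  by apply/existsNP.
have iS : irreducible S.
  split; first by exists (p gens`_i0) => /(pi0 Ksub).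
  move=> P Ps.
  have KP : forall x, K x -> P (p x).
    move=> x Kx; have -> : p x = 0 by apply/(pi0 Ksub).
    by case: Ps.
  case: (Kmax _ (pre P Ps) KP) => [sub|allg].
    by left => q; case: (qpiP q) => x -> /sub /(pi0 Ksub).
  by right => q; case: (qpiP q) => x ->; apply: (Hg _ (pre P Ps) allg).
have [f [fh fs]] := H S cS iS.
have [h [hh hf]] := HMproj N S cN cS p ph (@pi_surj _ _ _ Ksub) f fh.
have f0 m : f m = 0.
  rewrite -hf; apply/(pi0 Ksub); apply: TK; exists [:: (h, m)]; split.
    by move=> t [<-|].
  by rewrite ssum_cons ssum_nil addr0.
exfalso; apply: Ki0; apply/(pi0 Ksub).
by change (p gens`_i0 = 0); case: (fs (p gens`_i0)) => m <-; rewrite f0.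
Qed.

Theorem proposition7p6 (A : nualg) (HA : AUF A) (M : lmodule A)
  (HMcoh : coherent M) (HMproj : projective_coh M) :
  projective_generator M <->
  (forall N : lmodule A, coherent N -> irreducible N ->
     exists f : M -> N, is_hom f /\ surj f).
Proof.
split.
  move=> [_ [_ G]] N cN iN; have [n [_ [f [fh fs]]]] := G N cN.
  exact: fwd fh fs iN.
move=> H; split => //; split => //; exact: bwd.
Qed.
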